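(* Let $c\in(0,1]$ be a constant. For every $N,M$, every input $X=(x_1,\dots,x_N)\in[M]^N$ and every (sufficiently large) positive integer $T$, run the following sampling procedure $\mathcal{S}_T$: set $U:=24T^{1+c}\ln T$; choose indices $i_1,\dots,i_U\in[N]$ independently and uniformly at random (with replacement); query $x_{i_1},\dots,x_{i_U}$; for each $j\in[M]$ let $z_j$ be the number of occurrences of $j$ in $(x_{i_1},\dots,x_{i_U})$, and output $\widetilde\kappa_j:=\frac{N}{U}z_j$. Let $\kappa_j$ be the number of indices $i\in[N]$ with $x_i=j$. Then with probability $1-O(1/T)$ (the implied constant independent of $N,M,X$), we have \[ |\widetilde\kappa_j-\kappa_j|\le \frac{N}{T}+\frac{\kappa_j}{T^{c}}\quad\text{for all } j\in[M]. \] *)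

(* Defs.v *)
From mathcomp Require Import all_boot.
From Stdlib Require Import Reals ZArith.
Set Implicit Arguments. Unset Strict Implicit. Unset Printing Implicit Defensive.

Definition Rleb (x y : R) : bool := if Rle_dec x y then true else false.

(* ceiling of a real, as a nat (negative values are sent to 0) *)
Definition nat_ceil (x : R) : nat := Z.to_nat (- Int_part (- x))%Z.

Definition sample_size (c : R) (T : nat) : nat :=
  nat_ceil (24 * Rpower (INR T) (1 + c) * ln (INR T))%R.

Definition kappa (N M : nat) (X : 'I_N -> 'I_M) (j : 'I_M) : nat :=
  #|[set i : 'I_N | X i == j]|.

(* z_j = number of occurrences of j in (x_{i_1},...,x_{i_U}),
   where the sample s maps k in [U] to the index i_k in [N] *)
Definition zcount (N M U : nat) (X : 'I_N -> 'I_M) (s : {ffun 'I_U -> 'I_N})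
  (j : 'I_M) : nat :=
  #|[set k : 'I_U | X (s k) == j]|.

Definition kappa_est (N M U : nat) (X : 'I_N -> 'I_M) (s : {ffun 'I_U -> 'I_N})
  (j : 'I_M) : R :=
  (INR N / INR U * INR (zcount X s j))%R.

Definition good_sample (c : R) (T N M U : nat) (X : 'I_N -> 'I_M)
  (s : {ffun 'I_U -> 'I_N}) : bool :=
  [forall j : 'I_M,
     Rleb (Rabs (kappa_est X s j - INR (kappa X j)))
          (INR N / INR T + INR (kappa X j) / Rpower (INR T) c)%R].

(* Probability that the sampling procedure S_T fails: the U indices are drawn
   independently and uniformly from [N], i.e. s is uniform on [N]^[U]. *)
Definition fail_prob (c : R) (T N M : nat) (X : 'I_N -> 'I_M) : R :=
  (INR #|[set s : {ffun 'I_(sample_size c T) -> 'I_N} | ~~ good_sample c T X s]|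
   / INR (N ^ sample_size c T))%R.

(* Main.v *)
Require Import Defs.
From mathcomp Require Import all_boot.
From Stdlib Require Import Reals.

Module Aux.
From mathcomp Require Import all_algebra Rstruct ring.
From Stdlib Require Import Lra.
Import GRing.Theory Num.Theory.
Local Open Scope ring_scope.

Lemma sum_ind (N M : nat) (X : 'I_N -> 'I_M) (j : 'I_M) (e : R) :
  \sum_(i : 'I_N) (if X i == j then e else 1) = N%:R + (e - 1) * (kappa X j)%:R.
Proof.
rewrite (bigID (fun i => X i == j)) /=.
rewrite (eq_bigr (fun _ => e)); last by move=> i ->.
rewrite [X in _ + X](eq_bigr (fun _ => 1)); last by move=> i /negbTE ->.
rewrite !sumr_const /kappa.
have -> : #|[set i | X i == j]| = #|[pred i | X i == j]| by apply: eq_card => i; rewrite inE.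
have H := cardC [pred i | X i == j]. rewrite card_ord in H.
have -> : #|[pred i | ~~ (X i == j)]| = #|[predC [pred i | X i == j]]|.
  by apply: eq_card => i; rewrite !inE.
move: H; set k := #|[pred i | X i == j]|; set k' := #|[predC _]| => H.
have -> : k' = subn N k by rewrite -H addKn.
rewrite -mulr_natl -[(1 *+ _)]mulr_natl natrB; last by rewrite -H leq_addr.
by rewrite mulr1; ring.
Qed.

Lemma mgf (N M U : nat) (X : 'I_N -> 'I_M) (j : 'I_M) (th : R) :
  \sum_(s : {ffun 'I_U -> 'I_N}) exp (th * INR (zcount X s j)) =
  (N%:R + (exp th - 1) * (kappa X j)%:R) ^+ U.
Proof.
have E : forall s : {ffun 'I_U -> 'I_N}, exp (th * INR (zcount X s j)) =
    \prod_(k : 'I_U) (fun k i => if X i == j then exp th else 1) k (s k).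
  move=> s /=; rewrite INRE RmultE mulr_natr -expRX /zcount -prodr_const.
  by rewrite big_mkcond /=; apply: eq_bigr => k _; rewrite inE.
rewrite (eq_bigr _ (fun s _ => E s)) -(bigA_distr_bigA (fun (k : 'I_U) (i : 'I_N) => if X i == j then exp th else 1)) /=.
by rewrite prodr_const card_ord sum_ind.
Qed.

Lemma markov_gen (S : finType) (w : S -> R) (P : pred S) (m : R) :
  (forall s, 0 <= w s) -> (forall s, P s -> m <= w s) ->
  m * #|P|%:R <= \sum_s w s.
Proof.
move=> w0 Pw; rewrite (bigID P) /= -[m * _]addr0; apply: lerD; last first.
  by apply: sumr_ge0 => s _.
rewrite mulr_natr -sumr_const; apply: ler_sum => s Ps; exact: Pw.
Qed.

Lemma sum_exp_sub (N M U : nat) (X : 'I_N -> 'I_M) (j : 'I_M) (th : R) :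
  \sum_(s : {ffun 'I_U -> 'I_N}) (exp (th * INR (zcount X s j)) - 1) =
  (N%:R + (exp th - 1) * (kappa X j)%:R) ^+ U - N%:R ^+ U.
Proof.
rewrite sumrB mgf sumr_const card_ffun !card_ord natrX.
by rewrite -mulr_natl mulr1.
Qed.

Close Scope ring_scope.
Open Scope R_scope.

Ltac to_std := rewrite -?RminusE -?RmultE -?RplusE -?RoppE -?R0E -?R1E.

Lemma exp_le x y : x <= y -> exp x <= exp y.
Proof. move=> h; case: (Rle_lt_or_eq_dec _ _ h) => [/exp_increasing|->]; lra. Qed.

Lemma markov_up (N M U : nat) (X : 'I_N -> 'I_M) (j : 'I_M)
  (P : pred {ffun 'I_U -> 'I_N}) (th a : R) :
  0 <= th -> (forall s, P s -> a <= INR (zcount X s j)) ->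
  INR #|P| * (exp (th * a) - 1) <=
  (INR N + (exp th - 1) * INR (kappa X j)) ^ U - INR N ^ U.
Proof.
move=> th0 HP.
have := @markov_gen _ (fun s => exp (th * INR (zcount X s j)) - 1) P (exp (th * a) - 1).
rewrite sum_exp_sub -!INRE -!RpowE -!RminusE -!RmultE -!RplusE.
move=> H; rewrite Rmult_comm; apply/RleP; apply: H.
- move=> s; apply/RleP.
  have : 0 <= th * INR (zcount X s j) by apply: Rmult_le_pos => //; apply: pos_INR.
  move=> h; have := exp_le _ _ h; rewrite exp_0; to_std; lra.
- move=> s Ps; apply/RleP; have h : th * a <= th * INR (zcount X s j).
    by apply: Rmult_le_compat_l => //; apply: HP.
  have := exp_le _ _ h.
  to_std; lra.
Qed.

Lemma markov_low (N M U : nat) (X : 'I_N -> 'I_M) (j : 'I_M)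
  (P : pred {ffun 'I_U -> 'I_N}) (th b : R) :
  0 <= th -> (forall s, P s -> INR (zcount X s j) <= b) ->
  INR #|P| * exp (- (th * b)) <=
  (INR N + (exp (- th) - 1) * INR (kappa X j)) ^ U.
Proof.
move=> th0 HP.
have := @markov_gen _ (fun s => exp (- th * INR (zcount X s j))) P (exp (- (th * b))).
rewrite mgf -!INRE -!RpowE; to_std.
move=> H; rewrite Rmult_comm; apply/RleP; apply: H.
- move=> s; apply/RleP; apply: Rlt_le; apply: exp_pos.
- move=> s Ps; apply/RleP; apply: exp_le.
  have := Rmult_le_compat_l _ _ _ th0 (HP s Ps); lra.
Qed.

Lemma powE m n : Nat.pow m n = expn m n.
Proof. elim: n => [|n IH] //=; by rewrite expnS IH. Qed.

Lemma card_le_pow (N U : nat) (P : pred {ffun 'I_U -> 'I_N}) :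
  INR #|P| <= INR N ^ U.
Proof.
rewrite -pow_INR powE; apply: le_INR; apply/leP.
by apply: leq_trans (max_card _) _; rewrite card_ffun !card_ord.
Qed.

Lemma card_bigcup_le (T I : finType) (A : I -> {set T}) :
  (#|\bigcup_j A j| <= \sum_j #|A j|)%nat.
Proof.
apply: (@big_ind2 _ _ (fun (X : {set T}) (n : nat) => is_true (#|X| <= n)%nat)).
- by rewrite cards0.
- move=> x1 x2 y1 y2 h1 h2; apply: leq_trans (leq_card_setU _ _) _.
  exact: leq_add.
- by [].
Qed.

Lemma sum_kappa (N M : nat) (X : 'I_N -> 'I_M) :
  (\sum_j kappa X j)%nat = N.
Proof.
have := @partition_big _ _ addn _ (index_enum 'I_N) _ xpredT X xpredT (fun _ => 1%nat) (fun _ _ => isT).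
rewrite sum1_card card_ord => h; rewrite [RHS]h; apply: eq_bigr => j _.
by rewrite sum1_card /kappa; apply: eq_card => i; rewrite inE.
Qed.

Lemma union_bound (N M U : nat) (X : 'I_N -> 'I_M)
  (bad : 'I_M -> pred {ffun 'I_U -> 'I_N}) (K : R) :
  (forall j, INR #|[set s | bad j s]| <= K * INR (kappa X j)) ->
  INR #|[set s | [exists j, bad j s]]| <= K * INR N.
Proof.
move=> H.
have -> : [set s | [exists j, bad j s]] = \bigcup_j [set s | bad j s].
  apply/setP => s; rewrite !inE; apply/existsP/bigcupP.
  - by move=> [j hj]; exists j => //; rewrite inE.
  - by move=> [j _]; rewrite inE => hj; exists j.
apply: (Rle_trans _ _ _ (le_INR _ _ (leP (@card_bigcup_le _ _ (fun j => [set s | bad j s]))))) .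
have hk := @sum_kappa _ _ X.
apply: (Rle_trans _ (K * INR (\sum_j kappa X j)%nat)); last by rewrite hk; apply: Rle_refl.
rewrite !INRE !natr_sum RmultE; apply/RleP.
rewrite mulr_sumr; apply: ler_sum => j _; apply/RleP; rewrite -!INRE; exact: H.
Qed.

Lemma card_split (S : finType) (B P1 P2 : pred S) :
  (forall s, B s -> P1 s || P2 s) ->
  INR #|[set s | B s]| <= INR #|P1| + INR #|P2|.
Proof.
move=> H; rewrite -plus_INR; apply: le_INR; apply/leP.
apply: (@leq_trans #|[set s | P1 s] :|: [set s | P2 s]|).
  by apply: subset_leq_card; apply/subsetP => s; rewrite !inE => /H.
apply: leq_trans (leq_card_setU _ _) _.
by apply: leq_add; apply: subset_leq_card; apply/subsetP => s; rewrite inE.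
Qed.

Lemma card0R (S : finType) (P : pred S) : (forall s, ~~ P s) -> INR #|P| = 0.
Proof. by move=> H; rewrite eq_card0 // => s; apply/idP => hs; have := H s; rewrite (_ : P s = true) //. Qed.
End Aux.

Module Aux2.
From Stdlib Require Import Lra Lia ZArith.
Open Scope R_scope.

Lemma exp_le x y : x <= y -> exp x <= exp y.
Proof. move=> h; case: (Rle_lt_or_eq_dec _ _ h) => [/exp_increasing|->]; lra. Qed.

Lemma exp_pow_mul y (U : nat) : exp y ^ U = exp (INR U * y).
Proof.
elim: U => [|U IH]. rewrite /= Rmult_0_l exp_0; lra.
rewrite S_INR; change (exp y ^ U.+1) with (exp y * exp y ^ U).
rewrite IH -exp_plus; f_equal; ring.
Qed.

Lemma pow_exp_bound (n k x u : R) (U : nat) : 0 < n -> u = INR U -> 0 <= n + x * k ->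
  (n + x * k) ^ U <= n ^ U * exp (x * (u * k / n)).
Proof.
intros hn hu h.
replace (n + x * k) with (n * (1 + x * k / n)) by (field; lra).
rewrite Rpow_mult_distr; apply Rmult_le_compat_l; [apply pow_le; lra|].
replace (x * (u * k / n)) with (INR U * (x * k / n)) by (subst; field; lra).
rewrite -exp_pow_mul; apply pow_incr; split.
- replace (1 + x * k / n) with ((n + x * k) / n) by (field; lra).
  apply Rmult_le_pos; [lra| apply Rlt_le, Rinv_0_lt_compat; lra].
- apply exp_ineq1_le.
Qed.

Lemma expm1_le y : 0 <= y -> exp y - 1 <= y * exp y.
Proof.
intro hy. have := exp_ineq1_le (- y). intro h.
have hp := exp_pos y.
assert (exp (-y) * exp y = 1) by (rewrite -exp_plus; replace (-y + y) with 0 by ring; apply exp_0).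
nra.
Qed.

Lemma exp_up2 th : 0 <= th <= 1/2 -> exp th <= 1 + th + 2 * th ^ 2.
Proof.
move=> h. have := exp_ineq1_le (- th) => h1.
have hp := exp_pos th.
have h2 : exp (-th) * exp th = 1 by rewrite -exp_plus; replace (-th + th) with 0 by ring; apply exp_0.
have h3 : exp th * (1 - th) <= 1 by nra.
nra.
Qed.

Lemma exp_lowm th : 0 <= th -> exp (- th) <= 1 - th + th ^ 2.
Proof.
move=> h. have := exp_ineq1_le th => h1.
have hp := exp_pos (- th).
have h2 : exp (-th) * exp th = 1 by rewrite -exp_plus; replace (-th + th) with 0 by ring; apply exp_0.
have h3 : exp (- th) * (1 + th) <= 1 by nra.
nra.
Qed.

Lemma div_exp c A B m : c * exp A <= m * exp B -> c <= m * exp (B - A).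
Proof.
move=> h.
have e1 : exp A * exp (- A) = 1 by rewrite -exp_plus; replace (A + - A) with 0 by ring; apply exp_0.
have e2 : exp (B - A) = exp B * exp (- A) by rewrite -exp_plus.
rewrite e2.
have hp := exp_pos (- A).
have := Rmult_le_compat_r _ _ _ (Rlt_le _ _ hp) h.
have -> : c * exp A * exp (- A) = c by rewrite Rmult_assoc e1; ring.
lra.
Qed.

Lemma per_j (n u tt pc lt k E cntU cntL : R) (U : nat) :
  0 < n -> 0 <= k -> k <= n -> u = INR U -> 24 * tt * pc * lt <= u ->
  0 < tt -> 1 <= pc -> 1 <= lt -> E = exp (- (12 * lt)) ->
  let mu := u * k / n in let t := u / tt + mu / pc in
  (forall th, 0 <= th -> cntU * (exp (th * (mu + t)) - 1) <=
      (n + (exp th - 1) * k) ^ U - n ^ U) ->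
  0 <= cntU -> cntU <= n ^ U ->
  (forall th, 0 <= th -> cntL * exp (- (th * (mu - t))) <=
      (n + (exp (- th) - 1) * k) ^ U) ->
  (mu - t < 0 -> cntL = 0) -> 0 <= cntL ->
  cntU + cntL <= n ^ U * (5 * mu * E).
Proof.
move=> hn hk0 hkn hu hbig htt hpc hlt hE mu t Hup hcU0 hcU Hlow Hempty hcL0.
have hnU : 0 < n ^ U by apply: pow_lt.
have hu0 : 0 <= u by rewrite hu; apply: pos_INR.
have hmu0 : 0 <= mu.
  rewrite /mu; apply: Rmult_le_pos; [nra| apply: Rlt_le; apply: Rinv_0_lt_compat; lra].
have hA : 24 * pc * lt <= u / tt.
  apply: (Rmult_le_reg_r tt); first lra.
  have -> : u / tt * tt = u by field; lra.
  lra.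
have hB0 : 0 <= mu / pc.
  apply: Rmult_le_pos => //; apply: Rlt_le; apply: Rinv_0_lt_compat; lra.
have ht24 : 24 * lt <= t.
  have : 0 <= (pc - 1) * lt by apply: Rmult_le_pos; lra.
  rewrite /t; lra.
have hAB : 24 * lt * mu <= u / tt * (mu / pc).
  have -> : u / tt * (mu / pc) = (u / tt / pc) * mu by field; lra.
  apply: Rmult_le_compat_r => //.
  apply: (Rmult_le_reg_r pc); first lra.
  have -> : u / tt / pc * pc = u / tt by field; lra.
  lra.
have ht2 : 96 * lt * mu <= t ^ 2.
  have : 0 <= (u / tt - mu / pc) ^ 2 by apply: pow2_ge_0.
  rewrite /t; nra.
have hE0 : 0 < E by rewrite hE; apply: exp_pos.
have hUp : cntU <= n ^ U * (4 * mu * E).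
  case: (Rle_lt_dec mu (t / 2)) => hS.
  - have h1 := Hup 1 ltac:(lra).
    rewrite Rmult_1_l in h1.
    have h2 := pow_exp_bound n k (exp 1 - 1) u U hn hu ltac:(have := exp_ineq1_le 1; nra).
    have he3 := exp_le_3.
    have he2 : 2 <= exp 1 by have := exp_ineq1_le 1; lra.
    have h3 := expm1_le ((exp 1 - 1) * mu) ltac:(nra).
    have h4 : exp ((exp 1 - 1) * mu) <= exp (2 * mu) by apply: exp_le; nra.
    have h5 : exp (2 * mu) = exp (mu + t) * exp (mu - t) by rewrite -exp_plus; f_equal; ring.
    have h6 : exp (mu - t) <= E by rewrite hE; apply: exp_le; lra.
    have ha : 2 <= exp (mu + t).
      have := exp_ineq1_le (mu + t); lra.
    set a := exp (mu + t) in h1 h5 ha.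
    set w := exp (mu - t) in h5 h6.
    set z := exp ((exp 1 - 1) * mu) in h2 h3 h4.
    have hw0 : 0 < w by apply: exp_pos.
    have hz0 : 0 < z by apply: exp_pos.
    have hz1 : (exp 1 - 1) * mu * z <= 2 * mu * z.
      apply: Rmult_le_compat_r; [lra|nra].
    have hz2 : 2 * mu * z <= 2 * mu * (a * w).
      apply: Rmult_le_compat_l; [lra|]; rewrite -h5; exact h4.
    have hz : z - 1 <= 2 * mu * a * w by lra.
    have h7 : cntU * (a - 1) <= n ^ U * (2 * mu * a * w).
      apply: Rle_trans h1 _.
      have : (exp 1 - 1) * mu = (exp 1 - 1) * (u * k / n) by [].
      have -> : (exp 1 - 1) * (u * k / n) = (exp 1 - 1) * mu by [].
      rewrite -/z in h2. nra.
    have h8 : cntU * a <= n ^ U * (4 * mu * w) * a by nra.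
    have h9 : cntU <= n ^ U * (4 * mu * w).
      apply: (Rmult_le_reg_r a); [lra| exact h8].
    have : n ^ U * (4 * mu * w) <= n ^ U * (4 * mu * E).
      apply: Rmult_le_compat_l; [lra|]; nra.
    lra.
  - have hmu : 0 < mu by lra.
    set th := t / (4 * mu).
    have hth0 : 0 <= th by rewrite /th; apply: Rmult_le_pos; [lra| apply: Rlt_le; apply: Rinv_0_lt_compat; lra].
    have hth1 : th <= 1 / 2.
      rewrite /th; apply: (Rmult_le_reg_r (4 * mu)); first lra.
      have -> : t / (4 * mu) * (4 * mu) = t by field; lra.
      lra.
    have h1 := Hup th hth0.
    have hx : 1 <= exp th by have := exp_ineq1_le th; lra.
    have h2 := pow_exp_bound n k (exp th - 1) u U hn hu ltac:(nra).
    rewrite -/mu in h2.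
    have h3 : exp ((exp th - 1) * mu) <= exp ((th + 2 * th ^ 2) * mu).
      apply: exp_le; apply: Rmult_le_compat_r => //; have := exp_up2 th ltac:(lra); lra.
    have h4 : cntU * exp (th * (mu + t)) <= n ^ U * exp ((th + 2 * th ^ 2) * mu).
      have : n ^ U * exp ((exp th - 1) * mu) <= n ^ U * exp ((th + 2 * th ^ 2) * mu).
        by apply: Rmult_le_compat_l => //; lra.
      nra.
    have h5 := div_exp _ _ _ _ h4.
    have h6 : (th + 2 * th ^ 2) * mu - th * (mu + t) = - (t ^ 2 / (8 * mu)).
      rewrite /th; field; lra.
    have h7 : 12 * lt <= t ^ 2 / (8 * mu).
      apply: (Rmult_le_reg_r (8 * mu)); first lra.
      have -> : t ^ 2 / (8 * mu) * (8 * mu) = t ^ 2 by field; lra.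
      lra.
    have h8 : exp ((th + 2 * th ^ 2) * mu - th * (mu + t)) <= E.
      rewrite h6 hE; apply: exp_le; lra.
    have : n ^ U * exp ((th + 2 * th ^ 2) * mu - th * (mu + t)) <= n ^ U * (4 * mu * E).
      apply: Rmult_le_compat_l; first lra.
      have : 1 <= mu by lra.
      nra.
    lra.
have hLow : cntL <= n ^ U * (mu * E).
  case: (Rlt_le_dec (mu - t) 0) => hS.
  - rewrite (Hempty hS); have : 0 <= mu * E by nra. nra.
  - have hmu : 0 < mu by lra.
    set th := t / (2 * mu).
    have hth0 : 0 <= th by rewrite /th; apply: Rmult_le_pos; [lra| apply: Rlt_le; apply: Rinv_0_lt_compat; lra].
    have h1 := Hlow th hth0.
    have hx0 := exp_pos (- th).
    have h2 := pow_exp_bound n k (exp (- th) - 1) u U hn hu ltac:(nra).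
    rewrite -/mu in h2.
    have h3 : exp ((exp (- th) - 1) * mu) <= exp ((- th + th ^ 2) * mu).
      apply: exp_le; apply: Rmult_le_compat_r => //; have := exp_lowm th hth0; lra.
    have h4 : cntL * exp (- (th * (mu - t))) <= n ^ U * exp ((- th + th ^ 2) * mu).
      have : n ^ U * exp ((exp (- th) - 1) * mu) <= n ^ U * exp ((- th + th ^ 2) * mu).
        by apply: Rmult_le_compat_l => //; lra.
      lra.
    have h5 := div_exp _ _ _ _ h4.
    have h6 : (- th + th ^ 2) * mu - - (th * (mu - t)) = - (t ^ 2 / (4 * mu)).
      rewrite /th; field; lra.
    have h7 : 12 * lt <= t ^ 2 / (4 * mu).
      apply: (Rmult_le_reg_r (4 * mu)); first lra.
      have -> : t ^ 2 / (4 * mu) * (4 * mu) = t ^ 2 by field; lra.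
      have : 0 <= lt * mu by nra.
      nra.
    have h8 : exp ((- th + th ^ 2) * mu - - (th * (mu - t))) <= E.
      rewrite h6 hE; apply: exp_le; lra.
    have : n ^ U * exp ((- th + th ^ 2) * mu - - (th * (mu - t))) <= n ^ U * (mu * E).
      apply: Rmult_le_compat_l; first lra.
      have : 1 <= mu by lra.
      nra.
    lra.
have : n ^ U * (4 * mu * E) + n ^ U * (mu * E) = n ^ U * (5 * mu * E) by ring.
lra.
Qed.


Lemma nat_ceil_ge x : x <= INR (nat_ceil x).
Proof.
rewrite /nat_ceil /Int_part.
have [h1 h2] := archimed (- x).
set z := up (- x) in h1 h2 *.
have e : (- (z - 1))%Z = (1 - z)%Z by ring.
rewrite e.
case: (Z_le_gt_dec 0 (1 - z)) => hz.
- rewrite INR_IZR_INZ Z2Nat.id // minus_IZR; lra.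
- have : IZR (1 - z) < 0 by apply: IZR_lt; lia.
  rewrite minus_IZR => h; have := pos_INR (Z.to_nat (1 - z)); lra.
Qed.

Lemma nat_ceil_le x : 0 <= x -> INR (nat_ceil x) <= x + 1.
Proof.
move=> hx; rewrite /nat_ceil /Int_part.
have [h1 h2] := archimed (- x).
set z := up (- x) in h1 h2 *.
have e : (- (z - 1))%Z = (1 - z)%Z by ring.
rewrite e.
case: (Z_le_gt_dec 0 (1 - z)) => hz.
- rewrite INR_IZR_INZ Z2Nat.id // minus_IZR; lra.
- have -> : Z.to_nat (1 - z) = 0%nat by lia.
  rewrite /=; lra.
Qed.

Lemma T_facts (c : R) (T : nat) : 0 < c -> c <= 1 -> (3 <= T)%nat ->
  1 <= Rpower (INR T) c /\ Rpower (INR T) c <= INR T /\ 1 <= ln (INR T) /\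
  ln (INR T) <= INR T /\ 3 <= INR T /\
  Rpower (INR T) (1 + c) = INR T * Rpower (INR T) c.
Proof.
move=> hc0 hc1 hT.
have h3 : 3 <= INR T by have := le_INR 3 T (leP hT); rewrite /=; lra.
have hlt : 1 <= ln (INR T).
  case: (Rle_lt_dec 1 (ln (INR T))) => // h.
  have := exp_increasing _ _ h; rewrite exp_ln; last lra.
  have := exp_le_3; lra.
split; first by rewrite -(Rpower_O (INR T)); [apply: Rle_Rpower; lra| lra].
split; first by rewrite -{2}(Rpower_1 (INR T)); [apply: Rle_Rpower; lra| lra].
split => //.
split; first by have := exp_ineq1_le (ln (INR T)); rewrite exp_ln; lra.
split => //.
by rewrite Rpower_plus Rpower_1 //; lra.
Qed.

Lemma bad_split (n u tt pc k z : R) : 0 < n -> 0 < u -> 0 < tt -> 0 < pc ->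
  ~ (Rabs (n / u * z - k) <= n / tt + k / pc) ->
  (u * k / n + (u / tt + u * k / n / pc) <= z) \/
  (z <= u * k / n - (u / tt + u * k / n / pc)).
Proof.
move=> hn hu htt hpc h.
set est := n / u * z in h.
have hz : z = u / n * est by rewrite /est; field; lra.
have e1 : u * k / n + (u / tt + u * k / n / pc) = u / n * (k + (n / tt + k / pc)).
  field; lra.
have e2 : u * k / n - (u / tt + u * k / n / pc) = u / n * (k - (n / tt + k / pc)).
  field; lra.
rewrite e1 e2 hz.
have hun : 0 < u / n by apply: Rdiv_lt_0_compat.
move: h; rewrite /Rabs; case: Rcase_abs => hs h.
- right; apply: Rmult_le_compat_l; lra.
- left; apply: Rmult_le_compat_l; lra.
Qed.

Lemma final_bound (u tt pc lt : R) : 3 <= tt -> 1 <= pc -> pc <= tt -> lt <= tt ->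
  tt = exp lt -> u <= 24 * tt * pc * lt + 1 ->
  5 * u * exp (- (12 * lt)) <= 125 / tt.
Proof.
move=> h3 hpc1 hpc hlt ht hu.
have e12 : exp (12 * lt) = tt ^ 12.
  rewrite ht exp_pow_mul; f_equal; rewrite /=; ring.
have hE : exp (- (12 * lt)) * tt ^ 12 = 1.
  by rewrite -e12 -exp_plus; replace (- (12 * lt) + 12 * lt) with 0 by ring; apply exp_0.
have hE0 := exp_pos (- (12 * lt)).
set E := exp (- (12 * lt)) in hE hE0 *.
have hl0 : 0 <= lt.
  case: (Rle_lt_dec 0 lt) => // h; have := exp_increasing _ _ h; rewrite exp_0; lra.
have hu3 : u <= 25 * tt ^ 3.
  have : pc * lt <= tt * tt by apply: Rmult_le_compat; lra.
  have : 1 <= tt ^ 3 by nra.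
  nra.
have h4 : E * tt ^ 4 <= 1.
  have : 1 <= tt ^ 8 by have := pow_R1_Rle tt 8 ltac:(lra); lra.
  have : E * tt ^ 4 * tt ^ 8 = 1 by rewrite -hE; ring.
  nra.
apply: (Rmult_le_reg_r tt); first lra.
have -> : 125 / tt * tt = 125 by field; lra.
have h5 : u * (E * tt) <= 25 * tt ^ 3 * (E * tt).
  apply: Rmult_le_compat_r => //; nra.
have : 25 * tt ^ 3 * (E * tt) = 25 * (E * tt ^ 4) by ring.
lra.
Qed.

End Aux2.

From Stdlib Require Import Lra.

Theorem lemma11 (c : R) (hc0 : (0 < c)%R) (hc1 : (c <= 1)%R) :
  exists (C : R) (T0 : nat), (0 < C)%R /\
    forall (N M : nat) (X : 'I_N -> 'I_M) (T : nat),
      (0 < N)%N -> (T0 <= T)%N ->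
      (fail_prob c T X <= C / INR T)%R.
Proof.
exists 125%R, 3%nat; split; first lra.
move=> N M X T hN hT.
Local Open Scope R_scope.
have [hpc1 [hpcT [hlt1 [hltT [h3 hRp]]]]] := Aux2.T_facts c T hc0 hc1 hT.
have hge := Aux2.nat_ceil_ge (24 * Rpower (INR T) (1 + c) * ln (INR T)).
have hle := Aux2.nat_ceil_le (24 * Rpower (INR T) (1 + c) * ln (INR T)).
rewrite /fail_prob.
rewrite -/(sample_size c T) in hge hle.
set U := sample_size c T in hge hle *.
set tt := INR T in hpc1 hpcT hlt1 hltT h3 hRp hge hle *.
set pc := Rpower tt c in hpc1 hpcT hRp *.
set lt := ln tt in hlt1 hltT hge hle *.
set u := INR U in hge hle *.
set n := INR N.
rewrite hRp in hge hle.
have hu_ge : 24 * tt * pc * lt <= u by lra.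
have hu_le : u <= 24 * tt * pc * lt + 1.
  have := hle ltac:(apply: Rmult_le_pos; [apply: Rmult_le_pos; nra| lra]); lra.
have hn : 0 < n by apply: lt_0_INR; apply/ltP.
have hu0 : 0 < u.
  have : 1 <= pc * lt by nra.
  nra.
set E := exp (- (12 * lt)).
have hE0 : 0 < E by apply: exp_pos.
have key : INR #|[set s : {ffun 'I_U -> 'I_N} | ~~ good_sample c T X s]| <=
    (5 * (u / n) * E * n ^ U) * n.
  have -> : [set s : {ffun 'I_U -> 'I_N} | ~~ good_sample c T X s] =
     [set s | [exists j, ~~ Defs.Rleb (Rabs (kappa_est X s j - INR (kappa X j)))
                (n / tt + INR (kappa X j) / pc)]].
    by apply/setP => s; rewrite !inE /good_sample negb_forall.
  apply: (@Aux.union_bound N M U X) => j.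
  set k := INR (kappa X j).
  set mu := u * k / n.
  set t := u / tt + mu / pc.
  pose P1 := [pred s : {ffun 'I_U -> 'I_N} | Defs.Rleb (mu + t) (INR (zcount X s j))].
  pose P2 := [pred s : {ffun 'I_U -> 'I_N} | Defs.Rleb (INR (zcount X s j)) (mu - t)].
  apply: (Rle_trans _ (INR #|P1| + INR #|P2|)).
    apply: Aux.card_split => s hb.
    have hb' : ~ (Rabs (n / u * INR (zcount X s j) - k) <= n / tt + k / pc).
      move: hb; rewrite /kappa_est /Defs.Rleb; case: Rle_dec => //.
    have hpc0 : 0 < pc by lra.
    case: (Aux2.bad_split n u tt pc k (INR (zcount X s j)) hn hu0 ltac:(lra) hpc0 hb') => h.
    - by apply/orP; left; rewrite /P1 inE /Defs.Rleb; case: Rle_dec.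
    - by apply/orP; right; rewrite /P2 inE /Defs.Rleb; case: Rle_dec.
  have hk0 : 0 <= k by apply: pos_INR.
  have hkn : k <= n.
    apply: le_INR; apply/leP; rewrite /kappa.
    by apply: leq_trans (max_card _) _; rewrite card_ord.
  have := @Aux2.per_j n u tt pc lt k E (INR #|P1|) (INR #|P2|) U hn hk0 hkn
    erefl hu_ge ltac:(lra) hpc1 hlt1 erefl.
  cbv zeta; rewrite -/mu -/t => H.
  have e : 5 * (u / n) * E * n ^ U * k = n ^ U * (5 * mu * E) by rewrite /mu; field; lra.
  rewrite e; apply: H.
  - move=> th hth; apply: Aux.markov_up => // s; rewrite /P1 inE /Defs.Rleb.
    by case: Rle_dec.
  - exact: pos_INR.
  - exact: Aux.card_le_pow.
  - move=> th hth; apply: Aux.markov_low => // s; rewrite /P2 inE /Defs.Rleb.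
    by case: Rle_dec.
  - move=> hneg; apply: Aux.card0R => s; rewrite /P2 inE /Defs.Rleb.
    case: Rle_dec => // hle'; have := pos_INR (zcount X s j); lra.
  - exact: pos_INR.
have hexp : tt = exp lt by rewrite /lt exp_ln //; lra.
have hfin := Aux2.final_bound u tt pc lt h3 hpc1 hpcT hltT hexp hu_le.
rewrite -/E in hfin.
have hnU : 0 < n ^ U by apply: pow_lt.
rewrite pow_INR.
apply: (Rle_trans _ (5 * u * E)) => //.
apply: (Rmult_le_reg_r (n ^ U)) => //.
have -> : INR #|[set s : {ffun 'I_U -> 'I_N} | ~~ good_sample c T X s]| / n ^ U * n ^ U
   = INR #|[set s : {ffun 'I_U -> 'I_N} | ~~ good_sample c T X s]| by field; lra.
have -> : 5 * u * E * n ^ U = 5 * (u / n) * E * n ^ U * n by field; lra.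
exact: key.
Qed.
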